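(* Let $\mathcal{X},\mathcal{Y}$ be finite sets, $P$ a strictly positive joint pmf on $\mathcal{X}\times\mathcal{Y}$, $\rho>0$ and $q\in\mathbb{R}\setminus\{0\}$. Let $G$ be any conditional guessing function and let $Q^{(G)}(x,y)=\frac{1}{|\mathcal{Y}|\,s\,G(x|y)^{(1+\rho)/q}}$ with $s=\sum_{i=1}^{|\mathcal{X}|}i^{-(1+\rho)/q}$. Then $$ \left|R_{q,\rho}(P,G)-q\,\mathcal{RE}_{(\frac{q}{1+\rho},q)}(P,Q^{(G)})\right|\;\leq\;\ln(1+\ln|\mathcal{X}|). $$
   Context: A conditional guessing function is a map $G(\cdot|\cdot)$ on $\mathcal{X}\times\mathcal{Y}$ such that for each $y$, $x\mapsto G(x|y)$ is a bijection from $\mathcal{X}$ onto $\{1,\dots,|\mathcal{X}|\}$. The $q$-normalized expectation under $P$ is $E_q[F(X,Y)]=\frac{\sum_{x,y}F(x,y)P(x,y)^q}{\sum_{x,y}P(x,y)^q}$. With $P(x|y)=P(x,y)/\sum_{x'}P(x',y)$ and $P_q(x|y)=P(x|y)^q/\sum_{x'}P(x'|y)^q$, let $G^\ast_P$ be any conditional guessing function such that $G^\ast_P(x|y)<G^\ast_P(x'|y)$ implies $P_q(x|y)\ge P_q(x'|y)$. The redundancy is $R_{q,\rho}(P,G)=\frac1\rho\ln E_q[G(X|Y)^\rho]-\frac1\rho\ln E_q[G^\ast_P(X|Y)^\rho]$, expectations w.r.t. $P$. For strictly positive joint pmfs $P,Q$ on $\mathcal{X}\times\mathcal{Y}$ and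 $\alpha\neq\beta$ with $\alpha\beta\neq 0$, the conditional relative $(\alpha,\beta)$-entropy is $$\mathcal{RE}_{(\alpha,\beta)}(P,Q)=\frac{\alpha}{\beta(\beta-\alpha)}\ln\frac{\sum_{y}\left\{\sum_{x}P(x,y)^\beta Q(x,y)^{\alpha-\beta}\right\}\left\{\sum_{x}Q(x,y)^{\alpha}\right\}^{\frac{\beta}{\alpha}-1}}{\sum_{y}\left\{\sum_{x}P(x,y)^\alpha\right\}^{\frac{\beta}{\alpha}}};$$ in particular $q\,\mathcal{RE}_{(\frac{q}{1+\rho},q)}(P,Q)=\frac1\rho\ln\frac{\sum_y\{\sum_x P(x,y)^qQ(x,y)^{\alpha-q}\}\{\sum_xQ(x,y)^\alpha\}^{\rho}}{\sum_y\{\sum_xP(x,y)^\alpha\}^{1+\rho}}$ with $\alpha=\frac{q}{1+\rho}$. *)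

(* Defs.v *)
From Stdlib Require Import Reals.
From mathcomp Require Import all_boot.
Set Implicit Arguments. Unset Strict Implicit. Unset Printing Implicit Defensive.

Local Open Scope R_scope.

Definition rsum (T : finType) (f : T -> R) : R := \big[Rplus/R0]_(i : T) f i.

Section Defs.
Variables (X Y : finType).

Definition pos_pmf (P : X -> Y -> R) : Prop :=
  (forall x y, 0 < P x y) /\ rsum (fun x : X => rsum (fun y : Y => P x y)) = 1.

Definition guessing_fun (G : X -> Y -> nat) : Prop :=
  forall y, injective (fun x => G x y) /\
    (forall x, (1 <= G x y <= #|X|)%N) /\
    (forall k, (1 <= k <= #|X|)%N -> exists x, G x y = k).

Definition Eq (q : R) (P : X -> Y -> R) (F : X -> Y -> R) : R :=
  rsum (fun x : X => rsum (fun y : Y => F x y * Rpower (P x y) q)) /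
  rsum (fun x : X => rsum (fun y : Y => Rpower (P x y) q)).

Definition cond (P : X -> Y -> R) (x : X) (y : Y) : R :=
  P x y / rsum (fun x' : X => P x' y).

Definition cond_q (q : R) (P : X -> Y -> R) (x : X) (y : Y) : R :=
  Rpower (cond P x y) q / rsum (fun x' : X => Rpower (cond P x' y) q).

Definition optimal_guess (q : R) (P : X -> Y -> R) (G : X -> Y -> nat) : Prop :=
  guessing_fun G /\
  forall x x' y, (G x y < G x' y)%N -> cond_q q P x y >= cond_q q P x' y.

Definition redundancy (q rho : R) (P : X -> Y -> R) (G Gstar : X -> Y -> nat) : R :=
  / rho * ln (Eq q P (fun x y => Rpower (INR (G x y)) rho))
  - / rho * ln (Eq q P (fun x y => Rpower (INR (Gstar x y)) rho)).

Definition RE (alpha beta : R) (P Q : X -> Y -> R) : R :=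
  alpha / (beta * (beta - alpha)) *
  ln (rsum (fun y : Y =>
          rsum (fun x : X => Rpower (P x y) beta * Rpower (Q x y) (alpha - beta))
          * Rpower (rsum (fun x : X => Rpower (Q x y) alpha)) (beta / alpha - 1))
      / rsum (fun y : Y => Rpower (rsum (fun x : X => Rpower (P x y) alpha)) (beta / alpha))).

Definition s_const (q rho : R) : R :=
  \big[Rplus/R0]_(1 <= i < #|X|.+1) Rpower (INR i) (- ((1 + rho) / q)).

Definition QG (q rho : R) (G : X -> Y -> nat) (x : X) (y : Y) : R :=
  / (INR #|Y| * s_const q rho * Rpower (INR (G x y)) ((1 + rho) / q)).

End Defs.

(* Main.v *)
Require Import Defs.
From Stdlib Require Import Reals Lra Psatz.
From HB Require Import structures.
From mathcomp Require Import all_boot.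
Local Open Scope R_scope.


Lemma Rplus_assoc' : associative Rplus. Proof. move=> *; ring. Qed.
HB.instance Definition _ := Monoid.isComLaw.Build R R0 Rplus Rplus_assoc' Rplus_comm Rplus_0_l.

Lemma rsum_ext (T : finType) (f g : T -> R) : (forall i, f i = g i) -> rsum f = rsum g.
Proof. by move=> H; apply: eq_bigr. Qed.

Lemma rsum_plus (T : finType) (f g : T -> R) : rsum (fun i => f i + g i) = rsum f + rsum g.
Proof. exact: big_split. Qed.

Lemma rsum_scal (T : finType) c (f : T -> R) : rsum (fun i => c * f i) = c * rsum f.
Proof.
rewrite /rsum; apply: (big_ind2 (fun a b => a = c * b)) => //.
- by rewrite Rmult_0_r.
- by move=> x1 x2 y1 y2 -> ->; ring.
Qed.

Lemma rsum_le (T : finType) (f g : T -> R) : (forall i, f i <= g i) -> rsum f <= rsum g.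
Proof.
move=> H; rewrite /rsum; apply: (big_ind2 (fun a b => a <= b)) => //.
- lra.
- by move=> x1 x2 y1 y2 ? ?; lra.
Qed.

Lemma rsum_ge0 (T : finType) (f : T -> R) : (forall i, 0 <= f i) -> 0 <= rsum f.
Proof.
move=> H; rewrite /rsum; apply: (big_ind (fun a => 0 <= a)) => //.
- lra.
- by move=> x1 x2 ? ?; lra.
Qed.

Lemma rsum_gt0 (T : finType) (f : T -> R) (x0 : T) : (forall i, 0 < f i) -> 0 < rsum f.
Proof.
move=> H; rewrite /rsum (bigD1 x0) //=.
have : 0 <= \big[Rplus/R0]_(i | i != x0) f i.
  apply: (big_ind (fun a => 0 <= a)) => //; [lra| move=> ? ? ? ?; lra | move=> i _; apply: Rlt_le; exact: H].
have := H x0; lra.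
Qed.

Lemma rsum_swap (X Y : finType) (F : X -> Y -> R) :
  rsum (fun x => rsum (fun y => F x y)) = rsum (fun y => rsum (fun x => F x y)).
Proof. exact: exchange_big. Qed.

Lemma rsum_reindex (T : finType) (g : T -> nat) (F : nat -> R) :
  injective g -> (forall x, (1 <= g x <= #|T|)%N) ->
  (forall k, (1 <= k <= #|T|)%N -> exists x, g x = k) ->
  rsum (fun x => F (g x)) = \big[Rplus/R0]_(1 <= i < #|T|.+1) F i.
Proof.
move=> inj rng sur.
rewrite /rsum -(big_map g xpredT F) /=.
apply: perm_big.
apply: uniq_perm.
- by rewrite map_inj_uniq // index_enum_uniq.
- exact: iota_uniq.
move=> i; rewrite mem_iota subSS subn0 add1n ltnS.
apply/mapP/idP.
- by case=> x _ ->; exact: rng.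
- by move=> /sur [x <-]; exists x; rewrite ?mem_index_enum.
Qed.

Definition harm (n : nat) : R := \big[Rplus/R0]_(1 <= i < n.+1) / INR i.

Lemma INRpos (n : nat) : (0 < n)%N -> 0 < INR n.
Proof. move=> h; apply: lt_0_INR; apply/ltP; exact: h. Qed.

Lemma ln_le' x y : 0 < x -> x <= y -> ln x <= ln y.
Proof. move=> hx [h|->]; [left; exact: ln_increasing| right; reflexivity]. Qed.

Lemma harm_bounds (n : nat) : (1 <= n)%N -> 1 <= harm n <= 1 + ln (INR n).
Proof.
elim: n => [//|n IH] _.
case: n IH => [|n] IH.
  rewrite /harm big_nat1 /= Rinv_1 ln_1; lra.
have [h1 h2] := IH isT.
have Hn : 0 < INR n.+1 by apply: INRpos.
rewrite /harm big_nat_recr // -/(harm n.+1).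
have Hp : 0 < / INR n.+2 by apply: Rinv_0_lt_compat; apply: INRpos.
change (1 <= harm n.+1 + / INR n.+2 <= 1 + ln (INR n.+2)). split; first lra.
have key : / INR n.+2 <= ln (INR n.+2) - ln (INR n.+1).
  have e := exp_ineq1_le (ln (INR n.+1 / INR n.+2)).
  rewrite exp_ln in e; last by apply: Rdiv_lt_0_compat => //; apply: INRpos.
  have H2 : 0 < INR n.+2 by apply: INRpos.
  rewrite /Rdiv ln_mult ?ln_Rinv in e; [|exact: H2|exact: Hn|apply: Rinv_0_lt_compat; exact: H2].
  have : INR n.+1 / INR n.+2 = 1 - / INR n.+2.
    rewrite (S_INR n.+1); field; rewrite -S_INR; apply: Rgt_not_eq; exact: H2.
  lra.
lra.
Qed.
Arguments rsum_ext {T f g}. Arguments rsum_plus {T}. Arguments rsum_scal {T}.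
Arguments rsum_le {T f g}. Arguments rsum_ge0 {T f}. Arguments rsum_gt0 {T f}.
Arguments rsum_swap {X Y}. Arguments rsum_reindex {T g} F. Arguments harm_bounds {n}.


Lemma Rpower_pos x y : 0 < Rpower x y.
Proof. exact: exp_pos. Qed.

Lemma Rpower_mulb x y z : 0 < x -> 0 < y -> Rpower (x * y) z = Rpower x z * Rpower y z.
Proof. by move=> hx hy; rewrite Rpower_mult_distr. Qed.

Lemma Rpower_invb x z : 0 < x -> Rpower (/ x) z = / Rpower x z.
Proof. move=> hx; rewrite /Rpower ln_Rinv // -exp_Ropp; congr exp; ring. Qed.

Lemma Rpower_1p x r : 0 < x -> Rpower x (1 + r) = x * Rpower x r.
Proof. move=> hx; by rewrite Rpower_plus Rpower_1. Qed.

Lemma bern u p : 0 < u -> 1 <= p -> p * u <= Rpower u p + (p - 1).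
Proof.
move=> hu hp.
set z := ln u.
have e1 := exp_ineq1_le ((p - 1) * z).
have e2 := exp_ineq1_le (- z).
have hu' : u = exp z by rewrite /z exp_ln.
have hup : Rpower u p = exp ((p - 1) * z) * u.
  rewrite hu' /Rpower ln_exp -exp_plus; congr exp; ring.
have hB : exp (- z) * u = 1.
  rewrite hu' -exp_plus; replace (- z + z) with 0 by ring; exact: exp_0.
rewrite hup.
have m1 : (1 + (p - 1) * z) * u <= exp ((p - 1) * z) * u by apply: Rmult_le_compat_r; lra.
have m2 : (p - 1) * ((1 + - z) * u) <= (p - 1) * (exp (- z) * u).
  apply: Rmult_le_compat_l; first lra. apply: Rmult_le_compat_r; lra.
rewrite hB in m2. nra.
Qed.

Lemma cnt m k : \big[Rplus/R0]_(1 <= i < m.+1) (if (i <= k)%N then 1 else 0) = INR (minn m k).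
Proof.
elim: m => [|m IH]; first by rewrite big_geq // min0n.
rewrite big_nat_recr // IH.
change (INR (minn m k) + (if (m < k)%N then 1 else 0) = INR (minn m.+1 k)).
case: (ltnP m k) => h.
- rewrite (minn_idPl h) S_INR; lra.
- have hm : (k <= m.+1)%N by apply: (leq_trans h).
  rewrite (minn_idPr hm); lra.
Qed.


Lemma lower (T : finType) (x0 : T) (a : T -> R) (g : T -> nat) r :
  (forall x, 0 < a x) -> 0 < r ->
  injective g -> (forall x, (1 <= g x <= #|T|)%N) ->
  (forall k, (1 <= k <= #|T|)%N -> exists x, g x = k) ->
  Rpower (rsum a) (1 + r) <=
  Rpower (harm #|T|) r * rsum (fun x => Rpower (a x) (1 + r) * Rpower (INR (g x)) r).
Proof.
move=> ha hr inj rng sur.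
have hn : (1 <= #|T|)%N by apply/card_gt0P; exists x0.
have [hH1 _] := harm_bounds hn.
have hH : 0 < harm #|T| by lra.
have hm : 0 < rsum a by apply: (rsum_gt0 x0).
have hg : forall x, 0 < INR (g x) by move=> x; apply: INRpos; case/andP: (rng x).
pose w x := / (harm #|T| * INR (g x)).
pose u x := harm #|T| * INR (g x) * a x / rsum a.
have hw : rsum w = 1.
  rewrite /w. transitivity (/ harm #|T| * rsum (fun x => / INR (g x))).
    rewrite -rsum_scal; apply: rsum_ext => x; rewrite Rinv_mult; ring.
  rewrite (rsum_reindex (fun i => / INR i) inj rng sur) -/(harm #|T|). field; lra.
have hwu : rsum (fun x => (1 + r) * (w x * u x)) = 1 + r.
  rewrite rsum_scal. transitivity ((1 + r) * (/ rsum a * rsum a)).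
    congr (_ * _). rewrite -rsum_scal. apply rsum_ext => x. rewrite /w /u. field.
    have := hg x; have := ha x; lra.
  field; lra.
have key : rsum (fun x => (1 + r) * (w x * u x)) <=
           rsum (fun x => w x * Rpower (u x) (1 + r) + r * w x).
  apply: rsum_le => x.
  have hux : 0 < u x.
    rewrite /u; apply: Rdiv_lt_0_compat => //; apply: Rmult_lt_0_compat => //; by apply: Rmult_lt_0_compat.
  have hwx : 0 < w x by rewrite /w; apply: Rinv_0_lt_compat; apply: Rmult_lt_0_compat.
  have b := bern (u x) (1 + r) hux ltac:(lra).
  have := Rmult_le_compat_l (w x) _ _ (Rlt_le _ _ hwx) b.
  lra.
rewrite hwu rsum_plus (rsum_scal r w) hw in key.
have e : forall x, w x * Rpower (u x) (1 + r) =
   / Rpower (rsum a) (1 + r) * (Rpower (harm #|T|) r * (Rpower (a x) (1 + r) * Rpower (INR (g x)) r)).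
  move=> x; rewrite /w /u /Rdiv !Rpower_mulb //; last by apply: Rinv_0_lt_compat.
  2: by apply: Rmult_lt_0_compat.
  2: by apply: Rmult_lt_0_compat => //; apply: Rmult_lt_0_compat.
  rewrite Rpower_invb // !(Rpower_1p _ r) //.
  have := Rpower_pos (rsum a) (1 + r); have := hg x.
  move=> h1 h2; have h3 := Rpower_pos (rsum a) r.
  field; repeat split; apply: Rgt_not_eq; try apply: Rmult_lt_0_compat; try assumption.
rewrite (rsum_ext e) rsum_scal rsum_scal in key.
have hp := Rpower_pos (rsum a) (1 + r).
have hk : 1 <= / Rpower (rsum a) (1 + r) * (Rpower (harm #|T|) r * rsum (fun i => Rpower (a i) (1 + r) * Rpower (INR (g i)) r)) by lra.
move: hk; set S := Rpower (harm #|T|) r * _ => hk.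
have := Rmult_le_compat_l _ _ _ (Rlt_le _ _ hp) hk.
rewrite Rmult_1_r -Rmult_assoc Rinv_r ?Rmult_1_l; lra.
Qed.

Lemma upper (T : finType) (x0 : T) (a : T -> R) (g : T -> nat) r :
  (forall x, 0 < a x) -> 0 < r -> injective g -> (forall x, (1 <= g x <= #|T|)%N) ->
  (forall k, (1 <= k <= #|T|)%N -> exists x, g x = k) ->
  (forall x x', (g x < g x')%N -> a x' <= a x) ->
  rsum (fun x => Rpower (a x) (1 + r) * Rpower (INR (g x)) r) <= Rpower (rsum a) (1 + r).
Proof.
move=> ha hr inj rng sur mono.
have hm : 0 < rsum a by apply: (rsum_gt0 x0).
have hg : forall x, 0 < INR (g x) by move=> x; apply: INRpos; case/andP: (rng x).
have cntx : forall x, INR (g x) * a x <= rsum a.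
  move=> x.
  have h1 : rsum (fun x' => if (g x' <= g x)%N then a x else 0) <= rsum a.
    apply: rsum_le => x'. case: ifP => hle; last by apply: Rlt_le.
    rewrite leq_eqVlt in hle; case/orP: hle => [/eqP e | lt].
    - have -> : x' = x by apply: inj. lra.
    - exact: mono.
  have h2 : rsum (fun x' => if (g x' <= g x)%N then a x else 0) = a x * INR (g x).
    transitivity (a x * rsum (fun x' => (fun i => if (i <= g x)%N then 1 else 0) (g x'))).
      rewrite -rsum_scal; apply: rsum_ext => x' /=; case: ifP => _; ring.
    rewrite (rsum_reindex (fun i => if (i <= g x)%N then 1 else 0) inj rng sur) cnt. case/andP: (rng x) => _ h. by rewrite (minn_idPr h).
  lra.
rewrite Rpower_1p // Rmult_comm -rsum_scal.
apply: rsum_le => x.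
rewrite Rpower_1p // Rmult_assoc (Rmult_comm (Rpower (rsum a) r)).
apply: Rmult_le_compat_l; first by apply: Rlt_le.
rewrite Rmult_comm -Rpower_mulb //.
apply: Rle_Rpower_l; first lra.
split; last exact: cntx.
by apply: Rmult_lt_0_compat.
Qed.


Lemma rsum_zero (T : finType) : (forall x : T, false) -> forall f : T -> R, rsum f = 0.
Proof. move=> h f; rewrite /rsum big_pred0 // => x; by move: (h x). Qed.

Lemma ln_Rpower x e : 0 < x -> ln (Rpower x e) = e * ln x.
Proof. move=> _; by rewrite /Rpower ln_exp. Qed.

Theorem theorem6 (X Y : finType) (P : X -> Y -> R) (rho q : R)
  (G Gstar : X -> Y -> nat) :
  pos_pmf P -> 0 < rho -> q <> 0 ->
  guessing_fun G -> optimal_guess q P Gstar ->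
  Rabs (redundancy q rho P G Gstar
        - q * RE (q / (1 + rho)) q P (QG q rho G))
  <= ln (1 + ln (INR #|X|)).
Proof.
move=> [Ppos Psum] hr hq hG [hGs mono].
have [x0 _] : exists x : X, True.
  case: (pickP (@predT X)) => [x _|h]; first by exists x.
  rewrite rsum_zero in Psum; [lra | move=> x; by have := h x].
have [y0 _] : exists y : Y, True.
  case: (pickP (@predT Y)) => [y _|h]; first by exists y.
  rewrite (rsum_ext (g := fun _ => 0)) in Psum; last by move=> x; apply: rsum_zero => y; by have := h y.
  rewrite (rsum_ext (g := fun x => 0 * 0)) ?rsum_scal in Psum; [lra | move=> *; ring].
set al := q / (1 + rho).
set a := fun x y => Rpower (P x y) al.
have hPq : forall x y, Rpower (P x y) q = Rpower (a x y) (1 + rho).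
  move=> x y; rewrite /a Rpower_mult; congr Rpower; rewrite /al; field; lra.
have ha : forall x y, 0 < a x y by move=> x y; exact: Rpower_pos.
have hn1 : (1 <= #|X|)%N by apply/card_gt0P; exists x0.
have [hH1 hH2] := harm_bounds hn1.
set H := harm #|X| in hH1 hH2.
have hmono : forall y x x', (Gstar x y < Gstar x' y)%N -> a x' y <= a x y.
  move=> y x x' hlt.
  have := mono x x' y hlt.
  rewrite /cond_q /cond /Rdiv !Rpower_mulb //; try (apply: Rinv_0_lt_compat; apply: (rsum_gt0 x0) => ?; exact: Ppos).
  set S1 := / rsum _. set S2 := Rpower (/ _) q.
  set S3 := / rsum _.
  have hS1 : 0 < S3 by apply: Rinv_0_lt_compat; apply: (rsum_gt0 x0) => ?; apply: Rpower_pos.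
  have hS2 : 0 < S2 by apply: Rpower_pos.
  move=> hge.
  have hle : Rpower (P x' y) q <= Rpower (P x y) q.
    apply: (Rmult_le_reg_r S2) => //; apply: (Rmult_le_reg_r S3) => //; lra.
  rewrite /a /al /Rdiv -!(Rpower_mult _ q).
  apply: Rle_Rpower_l; first by apply: Rlt_le; apply: Rinv_0_lt_compat; lra.
  split => //; exact: Rpower_pos.
have hPqpos : forall x y, 0 < Rpower (P x y) q by move=> *; exact: Rpower_pos.
set E1 := rsum (fun x => rsum (fun y => Rpower (INR (G x y)) rho * Rpower (P x y) q)).
set E2 := rsum (fun x => rsum (fun y => Rpower (INR (Gstar x y)) rho * Rpower (P x y) q)).
set Sq := rsum (fun x => rsum (fun y => Rpower (P x y) q)).
have hSq : 0 < Sq by apply: (rsum_gt0 x0) => x; apply: (rsum_gt0 y0) => y.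
have hE1 : 0 < E1 by apply: (rsum_gt0 x0) => x; apply: (rsum_gt0 y0) => y; apply: Rmult_lt_0_compat; apply: Rpower_pos.
have hE2 : 0 < E2 by apply: (rsum_gt0 x0) => x; apply: (rsum_gt0 y0) => y; apply: Rmult_lt_0_compat; apply: Rpower_pos.
have hred : redundancy q rho P G Gstar = /rho * (ln E1 - ln E2).
  have -> : redundancy q rho P G Gstar = /rho * ln (E1 / Sq) - /rho * ln (E2 / Sq) by [].
  rewrite /Rdiv !ln_mult ?ln_Rinv //; try (apply: Rinv_0_lt_compat; exact: hSq). ring.
have hGpos : forall x y, 0 < INR (G x y) by move=> x y; apply: INRpos; case: (hG y) => _ [h _]; case/andP: (h x).
set c0 := INR #|Y| * s_const X q rho.
have hs : s_const X q rho = rsum (fun x => Rpower (INR (G x y0)) (- ((1 + rho) / q))).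
  case: (hG y0) => i1 [i2 i3].
  by rewrite (rsum_reindex (fun i => Rpower (INR i) (- ((1 + rho) / q))) i1 i2 i3).
have hc0 : 0 < c0.
  apply: Rmult_lt_0_compat; first by apply: INRpos; apply/card_gt0P; exists y0.
  rewrite hs; apply: (rsum_gt0 x0) => x; exact: Rpower_pos.
have hQ : forall e x y, Rpower (QG q rho G x y) e = exp (- (e * ln c0)) * Rpower (INR (G x y)) (- (e * ((1 + rho) / q))).
  move=> e x y.
  have -> : QG q rho G x y = / (c0 * Rpower (INR (G x y)) ((1 + rho) / q)) by [].
  rewrite /Rpower ln_Rinv; last by apply: Rmult_lt_0_compat => //; exact: exp_pos.
  rewrite ln_mult //; last exact: exp_pos.
  rewrite ln_exp -exp_plus; congr exp; ring.
have hA : forall x y, Rpower (QG q rho G x y) (al - q) = exp ((q - al) * ln c0) * Rpower (INR (G x y)) rho.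
  move=> x y; rewrite hQ; congr (exp _ * Rpower _ _); rewrite /al; field; lra.
have hB : forall x y, Rpower (QG q rho G x y) al = exp (- (al * ln c0)) * / INR (G x y).
  move=> x y; rewrite hQ; congr (_ * _).
  have -> : - (al * ((1 + rho) / q)) = - 1 by rewrite /al; field; lra.
  by rewrite Rpower_Ropp Rpower_1.
have hsumB : forall y, rsum (fun x => Rpower (QG q rho G x y) al) = exp (- (al * ln c0)) * H.
  move=> y; rewrite (rsum_ext (hB ^~ y)) rsum_scal.
  case: (hG y) => i1 [i2 i3].
  by rewrite (rsum_reindex (fun i => / INR i) i1 i2 i3).
have hH : 0 < H by lra.
have hqal1 : q / al - 1 = rho by rewrite /al; field; lra.
have hqal : q / al = 1 + rho by rewrite /al; field; lra.
have hNy : forall y,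
  rsum (fun x => Rpower (P x y) q * Rpower (QG q rho G x y) (al - q)) *
  Rpower (rsum (fun x => Rpower (QG q rho G x y) al)) (q / al - 1)
  = Rpower H rho * rsum (fun x => Rpower (INR (G x y)) rho * Rpower (P x y) q).
  move=> y; rewrite hsumB hqal1 Rpower_mulb //; last exact: exp_pos.
  rewrite (rsum_ext (g := fun x => exp ((q - al) * ln c0) * (Rpower (INR (G x y)) rho * Rpower (P x y) q))); last first.
    by move=> x; rewrite hA; ring.
  rewrite rsum_scal.
  have : exp ((q - al) * ln c0) * Rpower (exp (- (al * ln c0))) rho = 1.
    rewrite /Rpower ln_exp -exp_plus -exp_0; congr exp; rewrite /al; field; lra.
  move=> e1; rewrite -[RHS]Rmult_1_l -e1; ring.
set Den := rsum (fun y => Rpower (rsum (fun x => a x y)) (1 + rho)).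
have hDen : 0 < Den by apply: (rsum_gt0 y0) => y; exact: Rpower_pos.
have hRE : q * RE al q P (QG q rho G) = /rho * (ln (Rpower H rho * E1) - ln Den).
  rewrite /RE (rsum_ext hNy) rsum_scal -rsum_swap -/E1 hqal -/Den.
  rewrite /Rdiv ln_mult ?ln_Rinv //; last by apply: Rinv_0_lt_compat.
  2: by apply: Rmult_lt_0_compat => //; exact: Rpower_pos.
  rewrite -Rmult_assoc; congr (_ * _); rewrite /al; field; repeat split; try lra; replace (q * (1 + rho) - q) with (q * rho) by ring; apply: Rmult_integral_contrapositive_currified; lra.
have hE2' : E2 = rsum (fun y => rsum (fun x => Rpower (a x y) (1 + rho) * Rpower (INR (Gstar x y)) rho)).
  rewrite /E2 rsum_swap; apply: rsum_ext => y; apply: rsum_ext => x; rewrite hPq; ring.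
have hup : E2 <= Den.
  rewrite hE2'; apply: rsum_le => y; case: (hGs y) => i1 [i2 i3].
  apply: (@upper _ x0 (fun x => a x y) (fun x => Gstar x y) rho) => //.
  by move=> x x'; exact: hmono.
have hlow : Den <= Rpower H rho * E2.
  rewrite hE2' -rsum_scal; apply: rsum_le => y; case: (hGs y) => i1 [i2 i3].
  by apply: (@lower _ x0 (fun x => a x y) (fun x => Gstar x y) rho).
have hl1 : ln E2 <= ln Den by apply: ln_le'.
have hl2 : ln Den <= rho * ln H + ln E2.
  have := ln_le' _ _ hDen hlow. rewrite ln_mult ?ln_Rpower //; exact: Rpower_pos.
have hlH : 0 <= ln H by rewrite -ln_1; apply: ln_le'; lra.
have hlH2 : ln H <= ln (1 + ln (INR #|X|)) by apply: ln_le'.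
have hl3 : ln (Rpower H rho * E1) = rho * ln H + ln E1 by rewrite ln_mult ?ln_Rpower //; exact: Rpower_pos.
rewrite hred hRE hl3.
have ht1 : 0 <= / rho * (ln Den - ln E2).
  apply: Rmult_le_pos; [apply: Rlt_le; exact: Rinv_0_lt_compat| lra].
have ht2 : / rho * (ln Den - ln E2) <= ln H.
  have : / rho * (ln Den - ln E2) <= / rho * (rho * ln H).
    apply: Rmult_le_compat_l; [apply: Rlt_le; exact: Rinv_0_lt_compat| lra].
  rewrite -Rmult_assoc Rinv_l ?Rmult_1_l //; lra.
have -> : / rho * (ln E1 - ln E2) - / rho * (rho * ln H + ln E1 - ln Den)
   = / rho * (ln Den - ln E2) - ln H by field; lra.
apply: Rabs_le; lra.
Qed.
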